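(* Let $n\ge1$ and $d\ge0$. The set $\mathcal D_{d,n}$ of admissible pairs is a doset on $\mathcal P_{d,n}$, and the poset $\mathcal P_{d,n}$ is a distributive lattice.
   Context: $\langle n\rangle=\{\bar n<\dots<\bar1<1<\dots<n\}$ with $\bar\imath=-i$; $\binom{\langle n\rangle}{n}$ is the set of $n$-element subsets $\alpha=\{\alpha_1<\dots<\alpha_n\}$ of $\langle n\rangle$. Let $\binom{\langle n\rangle}{n}_d:=\{\alpha^{(a)}\mid\alpha\in\binom{\langle n\rangle}{n},\ 0\le a\le d\}$, partially ordered by $\alpha^{(a)}\le\beta^{(b)}$ iff $a\le b$ and $\alpha_i\le\beta_{b-a+i}$ for $i=1,\dots,n-b+a$. An element $\alpha\in\binom{\langle n\rangle}{n}$ is admissible if for each $i\in[n]$ exactly one of $i,\bar\imath$ lies in $\alpha$; $\mathcal P_{d,n}$ is the subposet of $\binom{\langle n\rangle}{n}_d$ consisting of the $\alpha^{(a)}$ with $\alpha$ admissible. A cover $\alpha^{(a)}\lessdot\beta^{(a)}$ in $\mathcal P_{d,n}$ is of type (1) if $\alpha$ and $\beta$ have the same number of negative elements. A pair $(\alpha^{(a)},\beta^{(a)})$ with $\alpha^{(a)}<\beta^{(a)}$ is admissible if there is a saturated chain $\alpha^{(a)}=\gamma_0\lessdot\gamma_1\lessdot\dots\lessdot\gamma_s=\beta^{(a)}$ in $\mathcal P_{d,n}$ all of whose covers are of type (1); $\mathcal D_{d,n}$ consists of the admissible pairs together with the diagonal pairs $(\alpha^{(a)},\alpha^{(a)})$.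 A doset on a poset $\mathcal P$ is a set $\mathcal D$ with $\Delta_{\mathcal P}\subseteq\mathcal D\subseteq\{(x,y)\in\mathcal P\times\mathcal P\mid x\le y\}$ such that whenever $x\le y\le z$, $(x,z)\in\mathcal D$ iff both $(x,y)\in\mathcal D$ and $(y,z)\in\mathcal D$. *)

(* Defs.v *)
From mathcomp Require Import all_boot all_order all_algebra.
Set Implicit Arguments. Unset Strict Implicit. Unset Printing Implicit Defensive.
Import Order.TTheory GRing.Theory Num.Theory.

(* <n> = {nbar < ... < 1bar < 1 < ... < n} is encoded by 'I_(2*n) via the
   order-preserving bijection bval: j < n |-> -(n - j),  j >= n |-> j - n + 1. *)
Definition bval (n : nat) (j : 'I_(2 * n)) : int :=
  if (j < n)%N then (- Posz (n - j))%R else Posz (j - n).+1.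

(* alpha_i (1-indexed): the i-th smallest element of A, as an integer *)
Definition sorted_vals (n : nat) (A : {set 'I_(2 * n)}) : seq int :=
  sort (fun x y : int => (x <= y)%R) [seq bval x | x in A].
Definition comp (n : nat) (A : {set 'I_(2 * n)}) (i : nat) : int :=
  nth 0%R (sorted_vals A) i.-1.

Definition admissible (n : nat) (A : {set 'I_(2 * n)}) : bool :=
  [forall i : 'I_n,
    [exists j in A, bval j == Posz i.+1] (+) [exists j in A, bval j == (- Posz i.+1)%R]].

(* elements alpha^(a) of binom(<n>,n)_d are pairs (alpha, a), a : 'I_(d+1);
   the carrier also contains non-n-element sets, excluded by in_binom *)
Definition pelem (n d : nat) := ({set 'I_(2 * n)} * 'I_d.+1)%type.

Definition in_binom (n d : nat) (x : pelem n d) : bool := #|x.1| == n.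

Definition inP (n d : nat) (x : pelem n d) : bool := in_binom x && admissible x.1.

Definition le_bd (n d : nat) (x y : pelem n d) : bool :=
  (x.2 <= y.2)%N &&
  [forall i : 'I_n, ((i.+1 <= n - (y.2 - x.2))%N ==>
                    (comp x.1 i.+1 <= comp y.1 (y.2 - x.2 + i.+1))%R)].

Definition lt_bd (n d : nat) (x y : pelem n d) : bool := (x != y) && le_bd x y.

Definition cover_P (n d : nat) (x y : pelem n d) : bool :=
  [&& inP x, inP y, lt_bd x y & ~~ [exists z, [&& inP z, lt_bd x z & lt_bd z y]]].

Definition negcount (n : nat) (A : {set 'I_(2 * n)}) : nat :=
  #|[set j in A | (bval j < 0)%R]|.

Definition cover_type1 (n d : nat) (x y : pelem n d) : bool :=
  [&& cover_P x y, x.2 == y.2 & negcount x.1 == negcount y.1].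

Definition adm_pair (n d : nat) (x y : pelem n d) : Prop :=
  [&& inP x, inP y, x.2 == y.2 & lt_bd x y] /\
  exists s : seq (pelem n d), path (@cover_type1 n d) x s /\ last x s = y.

Definition Dset (n d : nat) (x y : pelem n d) : Prop :=
  (inP x /\ x = y) \/ adm_pair x y.

Definition is_doset (T : Type) (P : pred T) (le : rel T) (D : T -> T -> Prop) : Prop :=
  (forall x, P x -> D x x) /\
  (forall x y, D x y -> [/\ P x, P y & le x y]) /\
  (forall x y z, P x -> P y -> P z -> le x y -> le y z ->
     (D x z <-> D x y /\ D y z)).

Definition is_poset (T : Type) (P : pred T) (le : rel T) : Prop :=
  (forall x, P x -> le x x) /\
  (forall x y, P x -> P y -> le x y -> le y x -> x = y) /\
  (forall x y z, P x -> P y -> P z -> le x y -> le y z -> le x z).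

Definition is_distr_lattice (T : Type) (P : pred T) (le : rel T) : Prop :=
  is_poset P le /\
  exists meet join : T -> T -> T,
    (forall x y, P x -> P y ->
       [/\ P (meet x y), le (meet x y) x, le (meet x y) y &
           forall z, P z -> le z x -> le z y -> le z (meet x y)]) /\
    (forall x y, P x -> P y ->
       [/\ P (join x y), le x (join x y), le y (join x y) &
           forall z, P z -> le x z -> le y z -> le (join x y) z]) /\
    (forall x y z, P x -> P y -> P z ->
       meet x (join y z) = join (meet x y) (meet x z)).

(* Main.v *)
Require Import Defs.
From mathcomp Require Import all_boot all_order all_algebra zify.
Set Implicit Arguments. Unset Strict Implicit. Unset Printing Implicit Defensive.
Import Order.TTheory GRing.Theory Num.Theory.
Lemma bval_le n (x y : 'I_(2*n)) : (bval x <= bval y)%R = (x <= y)%N.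
Proof. rewrite /bval; case: ifP => hx; case: ifP => hy; apply/idP/idP; lia. Qed.
Lemma cnt_card (T : finType) (A : {set T}) (P : pred T) : count P (enum A) = #|[set x in A | P x]|.
Proof.
rewrite cardE /enum_mem size_filter count_filter. apply: eq_count => x; rewrite !inE andbC //.
Qed.

Definition Fc n (A : {set 'I_(2*n)}) (u : nat) : nat := #|[set s in A | (s < u)%N]|.
Definition memn n (A : {set 'I_(2*n)}) (m : nat) : bool := [exists j in A, nat_of_ord j == m].

Lemma FcS n (A : {set 'I_(2*n)}) m : Fc A m.+1 = Fc A m + memn A m.
Proof.
rewrite /Fc /memn; case: (boolP [exists j in A, _]) => [/existsP [j /andP [jA /eqP jm]] | hn].
- rewrite (_ : [set s in A | (s < m.+1)%N] = j |: [set s in A | (s < m)%N]).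
    rewrite cardsU1 !inE jm ltnn andbF /=; lia.
  apply/setP => s; rewrite !inE ltnS leq_eqVlt.
  case: (eqVneq s j) => [->|hs]; first by rewrite jA jm eqxx.
  have -> : (nat_of_ord s == m) = (s == j) by rewrite -jm.
  by rewrite (negbTE hs).
- rewrite addn0; apply: eq_card => s; rewrite !inE ltnS leq_eqVlt.
  case: (boolP (s \in A)) => //= sA; case: eqP => //= hs.
  by case/negP: hn; apply/existsP; exists s; rewrite sA hs eqxx.
Qed.

Lemma Fc0 n (A : {set 'I_(2*n)}) : Fc A 0 = 0.
Proof. by apply/eqP; rewrite cards_eq0; apply/eqP/setP => s; rewrite !inE ltn0 andbF. Qed.

Lemma Fcfull n (A : {set 'I_(2*n)}) u : (2*n <= u)%N -> Fc A u = #|A|.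
Proof. move=> h; apply: eq_card => s; rewrite !inE. by rewrite (leq_trans (ltn_ord s) h) andbT. Qed.

Lemma sv_sorted n (A : {set 'I_(2*n)}) : sorted <=%R (sorted_vals A).
Proof. apply: sort_sorted; exact: le_total. Qed.

Lemma sv_size n (A : {set 'I_(2*n)}) : size (sorted_vals A) = #|A|.
Proof. by rewrite /sorted_vals size_sort size_map cardE. Qed.

Lemma sv_count n (A : {set 'I_(2*n)}) (u : 'I_(2*n)) :
  count (fun w => w <= bval u)%R (sorted_vals A) = Fc A u.+1.
Proof.
have /permP -> : perm_eq (sorted_vals A) [seq bval x | x in A].
  by apply/permPl; apply: perm_sort.
rewrite count_map cnt_card /Fc; apply: eq_card => s; rewrite !inE /= bval_le ltnS //.
Qed.

Lemma sv_mem n (A : {set 'I_(2*n)}) v : v \in sorted_vals A -> exists w : 'I_(2*n), v = bval w.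
Proof. by rewrite mem_sort => /mapP [w _ ->]; exists w. Qed.

Lemma nth_le_count (r : seq int) v j : sorted <=%R r -> (j < size r)%N ->
  (nth 0 r j <= v)%R = (j < count (fun w => w <= v)%R r)%N.
Proof.
elim: r j => [|x r IH] j //= hs hj.
have hr : sorted <=%R r by apply: path_sorted hs.
have ha : all (fun y => x <= y)%R r by apply: order_path_min hs; exact: le_trans.
have c0 : ~~ (x <= v)%R -> count (fun w => w <= v)%R r = 0%N.
  move=> hxv; apply/eqP; rewrite -leqn0 leqNgt -has_count; apply/hasPn => y yr.
  apply: contra hxv => hyv; apply: le_trans hyv; exact: (allP ha).
case: j hj => [|j] hj /=.
  by case: (boolP (x <= v)%R) => h //=; rewrite c0.
case: (boolP (x <= v)%R) => h /=.
  by rewrite add1n ltnS IH.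
rewrite c0 // add0n ltn0; apply/negbTE; apply: contra h => h2.
apply: le_trans h2; apply: (allP ha); apply: mem_nth; done.
Qed.

Lemma bridge_fwd (s r : seq int) n t : sorted <=%R s -> sorted <=%R r ->
  size s = n -> size r = n ->
  (forall i, (i < n - t)%N -> (nth 0 s i <= nth 0 r (t + i))%R) ->
  forall v, (count (fun w => w <= v)%R r <= count (fun w => w <= v)%R s + t)%N.
Proof.
move=> ss sr zs zr H v.
set m := count _ r.
have mn : (m <= n)%N by rewrite -zr count_size.
case: (leqP m t) => hmt; first by lia.
have hi : (m - t.+1 < n - t)%N by lia.
have h1 : (nth 0 r (t + (m - t.+1)) <= v)%R.
  rewrite nth_le_count //; [rewrite -/m; lia | rewrite zr; lia].
have h2 : (nth 0 s (m - t.+1) <= v)%R by apply: le_trans (H _ hi) h1.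
rewrite nth_le_count // in h2; last by rewrite zs; lia.
by rewrite addnC -leq_subLR -subnSK.
Qed.

Lemma bridge_bwd (s r : seq int) n t : sorted <=%R s -> sorted <=%R r ->
  size s = n -> size r = n ->
  (forall v, v \in r -> (count (fun w => w <= v)%R r <= count (fun w => w <= v)%R s + t)%N) ->
  forall i, (i < n - t)%N -> (nth 0 s i <= nth 0 r (t + i))%R.
Proof.
move=> ss sr zs zr H i hi.
have hv : nth 0%R r (t + i) \in r by apply: mem_nth; rewrite zr; lia.
have := H _ hv.
have : (t + i < count (fun w => w <= nth 0%R r (t + i))%R r)%N.
  by rewrite -nth_le_count // zr; lia.
move=> h1 h2; rewrite nth_le_count //; last by rewrite zs; lia.
rewrite -(ltn_add2r t); apply: leq_trans _ h2; by rewrite addnC.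
Qed.

Definition Kf n d (x : pelem n d) (u : nat) : nat := Fc x.1 u + (d - x.2).

Lemma leK n d (x y : pelem n d) : #|x.1| = n -> #|y.1| = n ->
  le_bd x y <-> (forall u, (u <= 2 * n)%N -> (Kf y u <= Kf x u)%N).
Proof.
move=> cx cy.
have ax : (x.2 <= d)%N by rewrite -ltnS.
have ay : (y.2 <= d)%N by rewrite -ltnS.
have ss := sv_sorted x.1; have sr := sv_sorted y.1.
have zs : size (sorted_vals x.1) = n by rewrite sv_size.
have zr : size (sorted_vals y.1) = n by rewrite sv_size.
rewrite /Kf; split.
- case/andP => hab /forallP H u hu.
  have B := bridge_fwd ss sr zs zr (t := (y.2 - x.2)%N).
  case: u hu => [|w] hw; first by rewrite !Fc0; lia.
  have hw' : (w < 2 * n)%N by [].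
  rewrite -(sv_count _ (Ordinal hw')) -(sv_count _ (Ordinal hw')).
  suff : (count (fun w0 => (w0 <= bval (Ordinal hw'))%R) (sorted_vals y.1) <=
    count (fun w0 => (w0 <= bval (Ordinal hw'))%R) (sorted_vals x.1) + (y.2 - x.2))%N by lia.
  apply: B => i hi.
  have hin : (i < n)%N by lia.
  have := H (Ordinal hin) => /implyP /(_ hi).
  by rewrite /comp /= addnS.
- move=> H.
  have hab : (x.2 <= y.2)%N by have := H 0%N (leq0n _); rewrite !Fc0; lia.
  apply/andP; split => //; apply/forallP => i; apply/implyP => hi.
  rewrite /comp addnS /=.
  apply: (bridge_bwd ss sr zs zr) => // v /sv_mem [w ->].
  have := H w.+1 (ltn_ord w).
  rewrite -!sv_count; lia.
Qed.

Lemma bval_pos n (j : 'I_(2*n)) i : (bval j == Posz i.+1) = (nat_of_ord j == n + i)%N.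
Proof. rewrite /bval; case: ifP => hx; apply/eqP/eqP; lia. Qed.
Lemma bval_neg n (j : 'I_(2*n)) i : (i < n)%N -> (bval j == - Posz i.+1)%R = (nat_of_ord j == n - i.+1)%N.
Proof. move=> hi; rewrite /bval; case: ifP => hx; apply/eqP/eqP; lia. Qed.
Lemma bval_lt0 n (j : 'I_(2*n)) : (bval j < 0)%R = (j < n)%N.
Proof. rewrite /bval; case: ifP => hx; apply/idP/idP; lia. Qed.

Lemma adm_memn n (A : {set 'I_(2*n)}) :
  admissible A = [forall i : 'I_n, memn A (n + i) (+) memn A (n - i.+1)].
Proof.
apply: eq_forallb => i; congr (_ (+) _); apply: eq_existsb => j.
  by rewrite bval_pos.
by rewrite bval_neg.
Qed.

Lemma memn_in n (A : {set 'I_(2*n)}) (j : 'I_(2*n)) : memn A j = (j \in A).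
Proof.
apply/existsP/idP => [[j' /andP [jA /eqP e]]|jA]; last by exists j; rewrite jA eqxx.
by have <- : j' = j by apply: val_inj.
Qed.

Definition goodK n d (K : nat -> nat) : Prop :=
  [/\ forall u, (u < 2 * n)%N -> (K u <= K u.+1 <= (K u).+1)%N,
      K (2 * n) = K 0 + n, (K 0 <= d)%N &
      forall i, (i <= n)%N -> K (n + i) = K (n - i) + i].

Lemma Kf_good n d (x : pelem n d) : inP x -> goodK n d (Kf x).
Proof.
case/andP => /eqP cx ax; rewrite /Kf; split.
- by move=> u _; rewrite FcS; case: (memn _ _) => /=; lia.
- by rewrite Fcfull // Fc0 cx; lia.
- by rewrite Fc0; lia.
- elim => [|i IH] hi; first by rewrite !addn0 subn0.
  have hin : (i < n)%N by [].
  rewrite addnS FcS.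
  have e : n - i = (n - i.+1).+1 by lia.
  move: (IH (ltnW hi)); rewrite e FcS.
  rewrite adm_memn in ax; move/forallP: ax => /(_ (Ordinal hin)) /=.
  case: (memn _ (n + i)); case: (memn _ (n - i.+1)) => //=; lia.
Qed.

Definition mk n d (K : nat -> nat) : pelem n d :=
  ([set u : 'I_(2 * n) | (K u < K u.+1)%N], inord (d - K 0)).

Lemma mk_spec n d (K : nat -> nat) : goodK n d K ->
  inP (mk n d K) /\ forall u, (u <= 2 * n)%N -> Kf (mk n d K) u = K u.
Proof.
case=> H1 H2 H3 H4.
set A := (mk n d K).1.
have mA : forall u, (u < 2 * n)%N -> memn A u = (K u < K u.+1)%N.
  by move=> u hu; have := memn_in A (Ordinal hu); rewrite /= inE.
have FA : forall u, (u <= 2 * n)%N -> Fc A u + K 0 = K u.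
  elim => [|u IH] hu; first by rewrite Fc0.
  rewrite FcS mA //; have := IH (ltnW hu); have := H1 u hu.
  case: ltnP => /=; lia.
have e2 : (mk n d K).2 = d - K 0 :> nat by rewrite /= inordK // ltnS leq_subr.
split.
- apply/andP; split.
    rewrite /in_binom -/A; have := FA _ (leqnn _); rewrite Fcfull // H2 => h.
    apply/eqP; lia.
  rewrite -/A adm_memn; apply/forallP => i.
  have hi : (i < n)%N by [].
  rewrite !mA; [|lia|lia].
  have a1 := H4 i (ltnW hi); have a2 := H4 i.+1 hi.
  have b1 := H1 (n + i) ltac:(lia); have b2 := H1 (n - i.+1) ltac:(lia).
  have e : (n - i.+1).+1 = n - i by lia.
  rewrite e in b2 *; rewrite addnS in b1 a2.
  move: a1 a2 b1 b2; generalize (K (n + i)) (K (n + i).+1) (K (n - i.+1)) (K (n - i)) => p q r s.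
  clear; move=> a1 a2 b1 b2.
  by case: ltnP => h1; case: ltnP => h2 /=; lia.
- move=> u hu; rewrite /Kf e2 -/A -(FA u hu); lia.
Qed.

Lemma Kinj n d (x y : pelem n d) :
  (forall u, (u <= 2 * n)%N -> Kf x u = Kf y u) -> x = y.
Proof.
move=> H.
have ax : (x.2 <= d)%N by rewrite -ltnS.
have ay : (y.2 <= d)%N by rewrite -ltnS.
have e2 : x.2 = y.2 by apply: val_inj; have := H 0%N (leq0n _); rewrite /Kf !Fc0 /=; lia.
have eF : forall u, (u <= 2 * n)%N -> Fc x.1 u = Fc y.1 u.
  by move=> u hu; have := H u hu; rewrite /Kf e2; lia.
have e1 : x.1 = y.1.
  apply/setP => j; rewrite -!memn_in.
  have := eF j.+1 (ltn_ord j); rewrite !FcS eF ?(ltnW (ltn_ord j)) //.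
  by case: (memn _ _); case: (memn _ _) => //=; lia.
by case: x y e1 e2 {H eF ax ay} => [? ?] [? ?] /= -> ->.
Qed.

Lemma inP_card n d (x : pelem n d) : inP x -> #|x.1| = n.
Proof. by case/andP => /eqP. Qed.

Lemma leP n d (x y : pelem n d) : inP x -> inP y ->
  le_bd x y <-> (forall u, (u <= 2 * n)%N -> (Kf y u <= Kf x u)%N).
Proof. by move=> /inP_card hx /inP_card hy; apply: leK. Qed.

Lemma le_refl' n d (x : pelem n d) : inP x -> le_bd x x.
Proof. by move=> hx; apply/(leP hx hx). Qed.

Lemma le_anti' n d (x y : pelem n d) : inP x -> inP y -> le_bd x y -> le_bd y x -> x = y.
Proof.
move=> hx hy /(leP hx hy) h1 /(leP hy hx) h2; apply: Kinj => u hu.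
by apply/eqP; rewrite eqn_leq h1 ?h2.
Qed.

Lemma le_trans' n d (x y z : pelem n d) : inP x -> inP y -> inP z ->
  le_bd x y -> le_bd y z -> le_bd x z.
Proof.
move=> hx hy hz /(leP hx hy) h1 /(leP hy hz) h2; apply/(leP hx hz) => u hu.
exact: leq_trans (h2 u hu) (h1 u hu).
Qed.

Lemma lt_trans' n d (x y z : pelem n d) : inP x -> inP y -> inP z ->
  lt_bd x y -> lt_bd y z -> lt_bd x z.
Proof.
move=> hx hy hz /andP [nxy lxy] /andP [nyz lyz]; apply/andP; split; last exact: le_trans' lxy lyz.
apply/negP => /eqP exz; move: lxy; rewrite exz => lzy.
by move: nyz; rewrite (le_anti' hy hz lyz lzy) eqxx.
Qed.

Lemma goodK_max n d K1 K2 : goodK n d K1 -> goodK n d K2 ->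
  goodK n d (fun u => maxn (K1 u) (K2 u)).
Proof.
case=> a1 a2 a3 a4 [b1 b2 b3 b4]; split.
- move=> u hu; have := a1 u hu; have := b1 u hu; lia.
- rewrite a2 b2; lia.
- lia.
- move=> i hi; rewrite a4 // b4 //; lia.
Qed.

Lemma goodK_min n d K1 K2 : goodK n d K1 -> goodK n d K2 ->
  goodK n d (fun u => minn (K1 u) (K2 u)).
Proof.
case=> a1 a2 a3 a4 [b1 b2 b3 b4]; split.
- move=> u hu; have := a1 u hu; have := b1 u hu; lia.
- rewrite a2 b2; lia.
- lia.
- move=> i hi; rewrite a4 // b4 //; lia.
Qed.

Definition meetf n d (x y : pelem n d) : pelem n d :=
  mk n d (fun u => maxn (Kf x u) (Kf y u)).
Definition joinf n d (x y : pelem n d) : pelem n d :=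
  mk n d (fun u => minn (Kf x u) (Kf y u)).

Lemma meet_spec n d (x y : pelem n d) : inP x -> inP y ->
  inP (meetf x y) /\ forall u, (u <= 2 * n)%N -> Kf (meetf x y) u = maxn (Kf x u) (Kf y u).
Proof. by move=> hx hy; apply: mk_spec; apply: goodK_max; apply: Kf_good. Qed.

Lemma join_spec n d (x y : pelem n d) : inP x -> inP y ->
  inP (joinf x y) /\ forall u, (u <= 2 * n)%N -> Kf (joinf x y) u = minn (Kf x u) (Kf y u).
Proof. by move=> hx hy; apply: mk_spec; apply: goodK_min; apply: Kf_good. Qed.

Lemma distr_lattice n d : is_distr_lattice (@inP n d) (@le_bd n d).
Proof.
split.
  split; first exact: le_refl'.
  split; [exact: le_anti' | exact: le_trans'].
exists (@meetf n d), (@joinf n d); split; [|split].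
- move=> x y hx hy; have [hm Km] := meet_spec hx hy; split => //.
  + apply/(leP hm hx) => u hu; rewrite Km //; exact: leq_maxl.
  + apply/(leP hm hy) => u hu; rewrite Km //; exact: leq_maxr.
  + move=> z hz /(leP hz hx) h1 /(leP hz hy) h2; apply/(leP hz hm) => u hu.
    by rewrite Km // geq_max h1 ?h2.
- move=> x y hx hy; have [hm Km] := join_spec hx hy; split => //.
  + apply/(leP hx hm) => u hu; rewrite Km //; exact: geq_minl.
  + apply/(leP hy hm) => u hu; rewrite Km //; exact: geq_minr.
  + move=> z hz /(leP hx hz) h1 /(leP hy hz) h2; apply/(leP hm hz) => u hu.
    by rewrite Km // leq_min h1 ?h2.
- move=> x y z hx hy hz.
  have [hyz Kyz] := join_spec hy hz.
  have [hxy Kxy] := meet_spec hx hy.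
  have [hxz Kxz] := meet_spec hx hz.
  have [_ K1] := meet_spec hx hyz.
  have [_ K2] := join_spec hxy hxz.
  apply: Kinj => u hu; rewrite K1 // K2 // Kyz // Kxy // Kxz //; lia.
Qed.

Lemma negcountE n (A : {set 'I_(2*n)}) : negcount A = Fc A n.
Proof. by apply: eq_card => j; rewrite !inE bval_lt0. Qed.

Lemma le_deg n d (x y : pelem n d) : le_bd x y -> (x.2 <= y.2)%N.
Proof. by case/andP. Qed.

Lemma le_nc n d (x y : pelem n d) : inP x -> inP y -> le_bd x y ->
  (x.2 : nat) = y.2 -> (negcount y.1 <= negcount x.1)%N.
Proof.
move=> hx hy /(leP hx hy) h e; have := h n ltac:(lia).
by rewrite /Kf e !negcountE leq_add2r.
Qed.

Definition btw n d (x y : pelem n d) := [set z | [&& inP z, lt_bd x z & lt_bd z y]].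
Definition Rc n d (x y : pelem n d) (p q : pelem n d) := [&& cover_P p q, le_bd x p & le_bd q y].

Lemma sat_chain n d k (x y : pelem n d) : (#|btw x y| < k)%N -> inP x -> inP y -> lt_bd x y ->
  exists s, path (Rc x y) x s /\ last x s = y.
Proof.
elim: k x y => [|k IH] x y // hk hx hy hxy; rewrite ltnS in hk.
case: (boolP [exists z, [&& inP z, lt_bd x z & lt_bd z y]]) => [/existsP [z /and3P [hz hxz hzy]] | hn].
- have hzb : z \in btw x y by rewrite inE hz hxz hzy.
  have [s1 [p1 l1]] : exists s, path (Rc x z) x s /\ last x s = z.
    apply: IH => //; apply: leq_trans _ hk; apply: proper_card; apply/properP; split.
      apply/subsetP => w; rewrite !inE => /and3P [hw h1 h2]; rewrite hw h1 /=.
      exact: lt_trans' h2 hzy.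
    by exists z => //; rewrite !inE hz /= andbC /lt_bd eqxx.
  have [s2 [p2 l2]] : exists s, path (Rc z y) z s /\ last z s = y.
    apply: IH => //; apply: leq_trans _ hk; apply: proper_card; apply/properP; split.
      apply/subsetP => w; rewrite !inE => /and3P [hw h1 h2]; rewrite hw h2 andbT /=.
      exact: lt_trans' hxz h1.
    by exists z => //; rewrite !inE hz /= /lt_bd eqxx.
  exists (s1 ++ s2); rewrite cat_path last_cat l1; split => //; apply/andP; split.
    apply: sub_path p1 => p q /and3P [c h1 h2]; apply/and3P; split => //.
    case/and4P: c => hp hq /andP [_ lpq] _.
    by apply: le_trans' h2 _ => //; case/andP: hzy.
  apply: sub_path p2 => p q /and3P [c h1 h2]; apply/and3P; split => //.
  case/and4P: c => hp hq _ _.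
  by apply: le_trans' h1 => //; case/andP: hxz.
- exists [:: y]; split => //=; rewrite andbT; apply/and3P; split.
  + by apply/and4P; split.
  + exact: le_refl'.
  + exact: le_refl'.
Qed.

Lemma path_nc n d (x : pelem n d) s : path (@cover_type1 n d) x s ->
  (x.2 = (last x s).2) /\ negcount x.1 = negcount (last x s).1.
Proof.
elim: s x => [|y s IH] x //= /andP [/and3P [_ /eqP e1 /eqP e2] p].
by rewrite e1 e2; exact: IH.
Qed.

Lemma Dchar n d (x y : pelem n d) : inP x -> inP y -> le_bd x y ->
  (Dset x y <-> (x.2 = y.2 /\ negcount x.1 = negcount y.1)).
Proof.
move=> hx hy lxy; split.
- case=> [[_ <-] // | [h [s [p l]]]].
  by have := path_nc p; rewrite l.
- case=> e1 e2; case: (eqVneq x y) => [<- | nxy]; first by left.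
  right; have ltxy : lt_bd x y by rewrite /lt_bd nxy.
  split; first by rewrite hx hy e1 eqxx ltxy.
  have [s [p l]] := @sat_chain n d (#|btw x y|).+1 x y (leqnn _) hx hy ltxy.
  exists s; split => //; apply: sub_path p => p q /and3P [c h1 h2].
  have c' := c; case/and4P: c' => hp hq /andP [_ lpq] _.
  have d1 := le_deg h1; have d2 := le_deg lpq; have d3 := le_deg h2.
  have ep : (x.2 : nat) = p.2 by move: d1 d2 d3; rewrite e1; move: (nat_of_ord y.2) (nat_of_ord p.2) (nat_of_ord q.2) => a0 b0 c0; clear; lia.
  have eq : (p.2 : nat) = q.2 by move: d1 d2 d3; rewrite e1; move: (nat_of_ord y.2) (nat_of_ord p.2) (nat_of_ord q.2) => a0 b0 c0; clear; lia.
  have eq' : (q.2 : nat) = y.2 by move: d1 d2 d3; rewrite e1; move: (nat_of_ord y.2) (nat_of_ord p.2) (nat_of_ord q.2) => a0 b0 c0; clear; lia.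
  have n1 := le_nc hx hp h1 ep; have n2 := le_nc hp hq lpq eq; have n3 := le_nc hq hy h2 eq'.
  apply/and3P; split => //; first by apply/eqP/val_inj.
  apply/eqP; move: n1 n2 n3; rewrite e2; move: (negcount y.1) (negcount p.1) (negcount q.1) => a0 b0 c0; clear; lia.
Qed.

Lemma doset n d : is_doset (@inP n d) (@le_bd n d) (@Dset n d).
Proof.
split; first by move=> x hx; left.
split.
  move=> x y [[hx <-]|[h _]]; first by split => //; exact: le_refl'.
  by case/and4P: h => hx hy _ /andP [_ l].
move=> x y z hx hy hz lxy lyz.
have lxz := le_trans' hx hy hz lxy lyz.
have d1 := le_deg lxy; have d2 := le_deg lyz.
split.
- move/(Dchar hx hz lxz) => [e1 e2].
  have ex : (x.2 : nat) = y.2 by move: d1 d2; rewrite e1; lia.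
  have ey : (y.2 : nat) = z.2 by move: d1 d2; rewrite e1; lia.
  have n1 := le_nc hx hy lxy ex; have n2 := le_nc hy hz lyz ey.
  split; [apply/(Dchar hx hy lxy) | apply/(Dchar hy hz lyz)]; split; try exact: val_inj.
  + by apply/eqP; rewrite eqn_leq n1 /= e2 n2.
  + by apply/eqP; rewrite eqn_leq n2 /= -e2 n1.
- case=> /(Dchar hx hy lxy) [a1 a2] /(Dchar hy hz lyz) [b1 b2].
  by apply/(Dchar hx hz lxz); rewrite a1 a2.
Qed.

Theorem proposition3p16 (n d : nat) : (1 <= n)%N ->
  is_doset (@inP n d) (@le_bd n d) (@Dset n d) /\
  is_distr_lattice (@inP n d) (@le_bd n d).
Proof. by move=> _; split; [exact: doset | exact: distr_lattice]. Qed.
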